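(* Let $\sigma:\mathbb{R}\to\mathbb{R}$ be Lipschitz continuous with exactly $n$ zeros $x_1<\cdots<x_n$, and set $x_0=-\infty$, $x_{n+1}=+\infty$. For $i=0,1,\dots,n$ let $H_i(x)=\int_{a_i}^x\frac{\mathrm{d}y}{\sigma(y)}$ for $x\in(x_i,x_{i+1})$, where $a_i\in(x_i,x_{i+1})$ is a constant. Then for each $i=0,1,\dots,n$: (i) $H_i$ is well defined and monotone on $(x_i,x_{i+1})$; (ii) $H_i$ is a bijection from $(x_i,x_{i+1})$ onto $(-\infty,\infty)$; (iii) $H_i$ has an inverse $H_i^{-1}$, which is a bijection from $(-\infty,\infty)$ onto $(x_i,x_{i+1})$; (iv) for every $y\in\mathbb{R}$, the map $x\mapsto H_i^{-1}(H_i(x)+y)$ is a bijection from $(x_i,x_{i+1})$ onto $(x_i,x_{i+1})$, and $$\lim_{x\to x_i^+}H_i^{-1}(H_i(x)+y)=x_i,\qquad \lim_{x\to x_{i+1}^-}H_i^{-1}(H_i(x)+y)=x_{i+1}.$$ *)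

(* Defs.v *)
From Stdlib Require Import Reals.
From Coquelicot Require Export Coquelicot.
Open Scope R_scope.

Definition lipschitz (sigma : R -> R) : Prop :=
  exists L : R, forall x y, Rabs (sigma x - sigma y) <= L * Rabs (x - y).

(* The zeros x_1 < ... < x_n of sigma are z 1, ..., z n (z k for k outside
   1..n is irrelevant).  x_0 = -oo and x_{n+1} = +oo. *)
Definition xlo (z : nat -> R) (i : nat) : Rbar :=
  match i with O => m_infty | _ => Finite (z i) end.
Definition xhi (n : nat) (z : nat -> R) (i : nat) : Rbar :=
  if Nat.eqb i n then p_infty else Finite (z (S i)).

Definition in_ival (n : nat) (z : nat -> R) (i : nat) (x : R) : Prop :=
  Rbar_lt (xlo z i) x /\ Rbar_lt x (xhi n z i).

Definition Hfun (sigma : R -> R) (a : nat -> R) (i : nat) (x : R) : R :=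
  RInt (fun y => / sigma y) (a i) x.

Definition from_right (b : Rbar) : (R -> Prop) -> Prop :=
  match b with Finite r => at_right r | _ => Rbar_locally b end.
Definition from_left (b : Rbar) : (R -> Prop) -> Prop :=
  match b with Finite r => at_left r | _ => Rbar_locally b end.

Definition bij_on (A B : R -> Prop) (f : R -> R) : Prop :=
  (forall x, A x -> B (f x)) /\
  (forall x1 x2, A x1 -> A x2 -> f x1 = f x2 -> x1 = x2) /\
  (forall y, B y -> exists x, A x /\ f x = y).

(* Main.v *)
Require Import Defs.
From Stdlib Require Import Reals Lra Lia ClassicalEpsilon.
From Coquelicot Require Import Coquelicot.
Open Scope R_scope.

Lemma deriv_mono (K dK : R -> R) (x y : R) :
  x <= y -> (forall c, x <= c <= y -> is_derive K c (dK c)) ->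
  (forall c, x <= c <= y -> 0 <= dK c) -> K x <= K y.
Proof.
  intros Hxy Hd Hp. destruct (Req_dec x y) as [->|Hne]; [lra|].
  pose proof (MVT_gen K x y dK) as M; cbv zeta in M.
  rewrite Rmin_left, Rmax_right in M by lra.
  destruct M as [c [Hc Heq]].
  - intros; apply Hd; lra.
  - intros. apply continuity_pt_filterlim. apply (ex_derive_continuous K).
    exists (dK x0). apply Hd; lra.
  - pose proof (Hp c Hc). nra.
Qed.

Lemma deriv_smono (K dK : R -> R) (x y : R) :
  x < y -> (forall c, x <= c <= y -> is_derive K c (dK c)) ->
  (forall c, x <= c <= y -> 0 < dK c) -> K x < K y.
Proof.
  intros Hxy Hd Hp.
  pose proof (MVT_gen K x y dK) as M; cbv zeta in M.
  rewrite Rmin_left, Rmax_right in M by lra.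
  destruct M as [c [Hc Heq]].
  - intros; apply Hd; lra.
  - intros. apply continuity_pt_filterlim. apply (ex_derive_continuous K).
    exists (dK x0). apply Hd; lra.
  - pose proof (Hp c Hc). nra.
Qed.

Lemma d_ln_lin (p q x : R) : 0 < p + q * x ->
  is_derive (fun x => ln (p + q * x)) x (q / (p + q * x)).
Proof. intros H. auto_derive. lra. field. lra. Qed.

Lemma div_right_fin (G g : R -> R) (a b L : R) :
  a < b -> 0 < L ->
  (forall x, a <= x < b -> is_derive G x (g x)) ->
  (forall x, a <= x < b -> / (L * (b - x)) <= g x) ->
  filterlim G (at_left b) (Rbar_locally p_infty).
Proof.
  intros Hab HL Hd Hg.
  assert (Key : forall x, a <= x < b ->
     G a + / L * (ln (b - a) - ln (b - x)) <= G x).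
  { intros x Hx.
    pose (K := fun x => G x + / L * ln (b + (-1) * x)).
    assert (K a <= K x).
    { apply (deriv_mono K (fun c => g c + / L * ((-1) / (b + (-1) * c)))).
      - lra.
      - intros c Hc. unfold K. apply @is_derive_plus. apply Hd; lra.
        apply @is_derive_scal. apply d_ln_lin. lra.
      - intros c Hc. pose proof (Hg c ltac:(lra)).
        replace (/ L * (-1 / (b + -1 * c))) with (- / (L * (b - c))) by (field; lra).
        lra. }
    unfold K in H.
    replace (b + -1 * a) with (b - a) in H by ring.
    replace (b + -1 * x) with (b - x) in H by ring. lra. }
  intros P [M HM].
  set (T := ln (b - a) - L * (M - G a) - 1).
  assert (Hd0 : 0 < Rmin (exp T) (b - a)).
  { apply Rmin_pos. apply exp_pos. lra. }
  exists (mkposreal _ Hd0). intros y Hy Hyb. apply HM.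
  unfold ball in Hy; simpl in Hy; unfold AbsRing_ball, abs, minus, plus, opp in Hy; simpl in Hy.
  rewrite Rabs_left1 in Hy by lra.
  assert (H1 : b - y < exp T) by (pose proof (Rmin_l (exp T) (b - a)); lra).
  assert (H2 : b - y < b - a) by (pose proof (Rmin_r (exp T) (b - a)); lra).
  assert (H3 : ln (b - y) < T).
  { rewrite <- (ln_exp T). apply ln_increasing; lra. }
  pose proof (Key y ltac:(lra)).
  assert (/ L * (ln (b - a) - T) < / L * (ln (b - a) - ln (b - y))).
  { apply Rmult_lt_compat_l. apply Rinv_0_lt_compat; lra. lra. }
  assert (E : / L * (ln (b - a) - T) = M - G a + / L).
  { unfold T. field. lra. }
  pose proof (Rinv_0_lt_compat L HL). lra.
Qed.

Lemma div_right_inf (G g : R -> R) (a C L : R) :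
  0 < C -> 0 < L ->
  (forall x, a <= x -> is_derive G x (g x)) ->
  (forall x, a <= x -> / (C + L * (x - a)) <= g x) ->
  filterlim G (Rbar_locally p_infty) (Rbar_locally p_infty).
Proof.
  intros HC HL Hd Hg.
  assert (Key : forall x, a <= x ->
     G a + / L * (ln (C + L * (x - a)) - ln C) <= G x).
  { intros x Hx.
    pose (K := fun x => G x + (- / L) * ln ((C - L * a) + L * x)).
    assert (K a <= K x).
    { apply (deriv_mono K (fun c => g c + (- / L) * (L / ((C - L * a) + L * c)))).
      - lra.
      - intros c Hc. unfold K. apply @is_derive_plus. apply Hd; lra.
        apply @is_derive_scal. apply d_ln_lin. nra.
      - intros c Hc. pose proof (Hg c ltac:(lra)).
        replace (- / L * (L / (C - L * a + L * c))) with (- / (C + L * (c - a))) by (field; nra).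
        lra. }
    unfold K in H.
    replace (C - L * a + L * a) with C in H by ring.
    replace (C - L * a + L * x) with (C + L * (x - a)) in H by ring. lra. }
  intros P [M HM].
  set (T := ln C + L * (M - G a) + 1).
  exists (Rmax a (a + exp T / L)). intros y Hy. apply HM.
  pose proof (Rmax_l a (a + exp T / L)). pose proof (Rmax_r a (a + exp T / L)).
  assert (H1 : exp T < L * (y - a)).
  { assert (exp T / L < y - a) by lra.
    apply (Rmult_lt_compat_l L) in H1; [|lra].
    replace (L * (exp T / L)) with (exp T) in H1 by (field; lra). lra. }
  assert (H3 : T < ln (C + L * (y - a))).
  { rewrite <- (ln_exp T) at 1. apply ln_increasing. apply exp_pos. lra. }
  pose proof (Key y ltac:(lra)).
  assert (/ L * (T - ln C) < / L * (ln (C + L * (y - a)) - ln C)).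
  { apply Rmult_lt_compat_l. apply Rinv_0_lt_compat; lra. lra. }
  assert (E : / L * (T - ln C) = M - G a + / L).
  { unfold T. field. lra. }
  pose proof (Rinv_0_lt_compat L HL). lra.
Qed.

Lemma div_left_fin (G g : R -> R) (a b L : R) :
  b < a -> 0 < L ->
  (forall x, b < x <= a -> is_derive G x (g x)) ->
  (forall x, b < x <= a -> / (L * (x - b)) <= g x) ->
  filterlim G (at_right b) (Rbar_locally m_infty).
Proof.
  intros Hab HL Hd Hg.
  assert (Key : forall x, b < x <= a ->
     G x <= G a + / L * (ln (x - b) - ln (a - b))).
  { intros x Hx.
    pose (K := fun x => G x + (- / L) * ln ((- b) + 1 * x)).
    assert (K x <= K a).
    { apply (deriv_mono K (fun c => g c + (- / L) * (1 / ((- b) + 1 * c)))).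
      - lra.
      - intros c Hc. unfold K. apply @is_derive_plus. apply Hd; lra.
        apply @is_derive_scal. apply d_ln_lin. lra.
      - intros c Hc. pose proof (Hg c ltac:(lra)).
        replace (- / L * (1 / (- b + 1 * c))) with (- / (L * (c - b))) by (field; lra).
        lra. }
    unfold K in H.
    replace (- b + 1 * a) with (a - b) in H by ring.
    replace (- b + 1 * x) with (x - b) in H by ring. lra. }
  intros P [M HM].
  set (T := ln (a - b) + L * (M - G a) - 1).
  assert (Hd0 : 0 < Rmin (exp T) (a - b)).
  { apply Rmin_pos. apply exp_pos. lra. }
  exists (mkposreal _ Hd0). intros y Hy Hyb. apply HM.
  unfold ball in Hy; simpl in Hy; unfold AbsRing_ball, abs, minus, plus, opp in Hy; simpl in Hy.
  rewrite Rabs_right in Hy by lra.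
  assert (H1 : y - b < exp T) by (pose proof (Rmin_l (exp T) (a - b)); lra).
  assert (H2 : y - b < a - b) by (pose proof (Rmin_r (exp T) (a - b)); lra).
  assert (H3 : ln (y - b) < T).
  { rewrite <- (ln_exp T). apply ln_increasing; lra. }
  pose proof (Key y ltac:(lra)).
  assert (/ L * (ln (y - b) - ln (a - b)) < / L * (T - ln (a - b))).
  { apply Rmult_lt_compat_l. apply Rinv_0_lt_compat; lra. lra. }
  assert (E : / L * (T - ln (a - b)) = M - G a - / L).
  { unfold T. field. lra. }
  pose proof (Rinv_0_lt_compat L HL). lra.
Qed.

Lemma div_left_inf (G g : R -> R) (a C L : R) :
  0 < C -> 0 < L ->
  (forall x, x <= a -> is_derive G x (g x)) ->
  (forall x, x <= a -> / (C + L * (a - x)) <= g x) ->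
  filterlim G (Rbar_locally m_infty) (Rbar_locally m_infty).
Proof.
  intros HC HL Hd Hg.
  assert (Key : forall x, x <= a ->
     G x <= G a + / L * (ln C - ln (C + L * (a - x)))).
  { intros x Hx.
    pose (K := fun x => G x + / L * ln ((C + L * a) + (- L) * x)).
    assert (K x <= K a).
    { apply (deriv_mono K (fun c => g c + / L * (- L / ((C + L * a) + (- L) * c)))).
      - lra.
      - intros c Hc. unfold K. apply @is_derive_plus. apply Hd; lra.
        apply @is_derive_scal. apply d_ln_lin. nra.
      - intros c Hc. pose proof (Hg c ltac:(lra)).
        replace (/ L * (- L / (C + L * a + - L * c))) with (- / (C + L * (a - c))) by (field; nra).
        lra. }
    unfold K in H.
    replace (C + L * a + - L * a) with C in H by ring.
    replace (C + L * a + - L * x) with (C + L * (a - x)) in H by ring. lra. }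
  intros P [M HM].
  set (T := ln C + L * (G a - M) + 1).
  exists (Rmin a (a - exp T / L)). intros y Hy. apply HM.
  pose proof (Rmin_l a (a - exp T / L)). pose proof (Rmin_r a (a - exp T / L)).
  assert (H1 : exp T < L * (a - y)).
  { assert (exp T / L < a - y) by lra.
    apply (Rmult_lt_compat_l L) in H1; [|lra].
    replace (L * (exp T / L)) with (exp T) in H1 by (field; lra). lra. }
  assert (H3 : T < ln (C + L * (a - y))).
  { rewrite <- (ln_exp T) at 1. apply ln_increasing. apply exp_pos. lra. }
  pose proof (Key y ltac:(lra)).
  assert (/ L * (ln C - ln (C + L * (a - y))) < / L * (ln C - T)).
  { apply Rmult_lt_compat_l. apply Rinv_0_lt_compat; lra. lra. }
  assert (E : / L * (ln C - T) = M - G a - / L).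
  { unfold T. field. lra. }
  pose proof (Rinv_0_lt_compat L HL). lra.
Qed.
Definition Iv (lo hi : Rbar) (x : R) : Prop := Rbar_lt lo x /\ Rbar_lt x hi.

#[local] Instance from_right_filter lo : Filter (from_right lo).
Proof. destruct lo; simpl; typeclasses eauto. Qed.
#[local] Instance from_left_filter lo : Filter (from_left lo).
Proof. destruct lo; simpl; typeclasses eauto. Qed.

Lemma ball_R (b e y : R) : ball b e y <-> Rabs (y - b) < e.
Proof. unfold ball; simpl; unfold AbsRing_ball, abs, minus, plus, opp; simpl. tauto. Qed.

Lemma ev_pt_left lo hi a P : Iv lo hi a -> from_left hi P -> exists x, Iv lo hi x /\ P x.
Proof.
  intros [H1 H2] HP. destruct hi as [b| |]; simpl in H2, HP.
  - destruct HP as [e He].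
    exists (Rmax a (b - e / 2)).
    pose proof (Rmax_l a (b - e/2)). pose proof (Rmax_r a (b - e/2)).
    pose proof (cond_pos e).
    assert (Rmax a (b - e / 2) < b) by (apply Rmax_lub_lt; lra).
    split; [split|].
    + eapply Rbar_lt_le_trans; [exact H1|]. simpl; lra.
    + simpl; lra.
    + apply He; [|lra]. apply ball_R. rewrite Rabs_left by lra. lra.
  - destruct HP as [M HM]. exists (Rmax a (M + 1)).
    pose proof (Rmax_l a (M+1)). pose proof (Rmax_r a (M+1)).
    split; [split|].
    + eapply Rbar_lt_le_trans; [exact H1|]. simpl; lra.
    + simpl; auto.
    + apply HM; lra.
  - contradiction.
Qed.

Lemma ev_pt_right lo hi a P : Iv lo hi a -> from_right lo P -> exists x, Iv lo hi x /\ P x.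
Proof.
  intros [H1 H2] HP. destruct lo as [b| |]; simpl in H1, HP.
  - destruct HP as [e He].
    exists (Rmin a (b + e / 2)).
    pose proof (Rmin_l a (b + e/2)). pose proof (Rmin_r a (b + e/2)).
    pose proof (cond_pos e).
    assert (b < Rmin a (b + e / 2)) by (apply Rmin_glb_lt; lra).
    split; [split|].
    + simpl; lra.
    + eapply Rbar_le_lt_trans; [|exact H2]. simpl; lra.
    + apply He; [|lra]. apply ball_R. rewrite Rabs_right by lra. lra.
  - contradiction.
  - destruct HP as [M HM]. exists (Rmin a (M - 1)).
    pose proof (Rmin_l a (M-1)). pose proof (Rmin_r a (M-1)).
    split; [split|].
    + simpl; auto.
    + eapply Rbar_le_lt_trans; [|exact H2]. simpl; lra.
    + apply HM; lra.
Qed.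

Lemma nbhd_hi lo hi a P : Iv lo hi a -> Rbar_locally hi P ->
  exists p, Iv lo hi p /\ forall u, Iv lo hi u -> p < u -> P u.
Proof.
  intros [H1 H2] HP. destruct hi as [b| |]; simpl in H2, HP.
  - destruct HP as [e He].
    exists (Rmax a (b - e / 2)).
    pose proof (Rmax_l a (b - e/2)). pose proof (Rmax_r a (b - e/2)).
    pose proof (cond_pos e).
    assert (Rmax a (b - e / 2) < b) by (apply Rmax_lub_lt; lra).
    split; [split|].
    + eapply Rbar_lt_le_trans; [exact H1|]. simpl; lra.
    + simpl; lra.
    + intros u [_ Hu] Hpu. simpl in Hu. apply He. apply ball_R.
      rewrite Rabs_left by lra. lra.
  - destruct HP as [M HM]. exists (Rmax a M).
    pose proof (Rmax_l a M). pose proof (Rmax_r a M).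
    split; [split|].
    + eapply Rbar_lt_le_trans; [exact H1|]. simpl; lra.
    + simpl; auto.
    + intros u _ Hu. apply HM; lra.
  - contradiction.
Qed.

Lemma nbhd_lo lo hi a P : Iv lo hi a -> Rbar_locally lo P ->
  exists p, Iv lo hi p /\ forall u, Iv lo hi u -> u < p -> P u.
Proof.
  intros [H1 H2] HP. destruct lo as [b| |]; simpl in H1, HP.
  - destruct HP as [e He].
    exists (Rmin a (b + e / 2)).
    pose proof (Rmin_l a (b + e/2)). pose proof (Rmin_r a (b + e/2)).
    pose proof (cond_pos e).
    assert (b < Rmin a (b + e / 2)) by (apply Rmin_glb_lt; lra).
    split; [split|].
    + simpl; lra.
    + eapply Rbar_le_lt_trans; [|exact H2]. simpl; lra.
    + intros u [Hu _] Hpu. simpl in Hu. apply He. apply ball_R.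
      rewrite Rabs_right by lra. lra.
  - contradiction.
  - destruct HP as [M HM]. exists (Rmin a M).
    pose proof (Rmin_l a M). pose proof (Rmin_r a M).
    split; [split|].
    + simpl; auto.
    + eapply Rbar_le_lt_trans; [|exact H2]. simpl; lra.
    + intros u _ Hu. apply HM; lra.
Qed.

Lemma Iv_conv lo hi x1 x2 w : Iv lo hi x1 -> Iv lo hi x2 -> x1 <= w <= x2 -> Iv lo hi w.
Proof.
  intros [A1 B1] [A2 B2] Hw. split.
  - eapply Rbar_lt_le_trans; [exact A1|]. simpl; lra.
  - eapply Rbar_le_lt_trans; [|exact B2]. simpl; lra.
Qed.

Lemma abstract_inc (lo hi : Rbar) (a : R) (G : R -> R) :
  Iv lo hi a ->
  (forall x, Iv lo hi x -> continuity_pt G x) ->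
  (forall x1 x2, Iv lo hi x1 -> Iv lo hi x2 -> x1 < x2 -> G x1 < G x2) ->
  filterlim G (from_right lo) (Rbar_locally m_infty) ->
  filterlim G (from_left hi) (Rbar_locally p_infty) ->
  bij_on (Iv lo hi) (fun _ => True) G /\
  exists Ginv : R -> R,
    (forall x, Iv lo hi x -> Ginv (G x) = x) /\
    (forall r, G (Ginv r) = r) /\
    bij_on (fun _ => True) (Iv lo hi) Ginv /\
    forall y : R,
      bij_on (Iv lo hi) (Iv lo hi) (fun x => Ginv (G x + y)) /\
      filterlim (fun x => Ginv (G x + y)) (from_right lo) (Rbar_locally lo) /\
      filterlim (fun x => Ginv (G x + y)) (from_left hi) (Rbar_locally hi).
Proof.
  intros Ia Hc Hinc Hl Hr.
  assert (Hle : forall x1 x2, Iv lo hi x1 -> Iv lo hi x2 -> G x1 <= G x2 -> x1 <= x2).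
  { intros x1 x2 I1 I2 H. destruct (Rle_or_lt x1 x2) as [h|h]; auto.
    pose proof (Hinc _ _ I2 I1 h). lra. }
  assert (Hinj : forall x1 x2, Iv lo hi x1 -> Iv lo hi x2 -> G x1 = G x2 -> x1 = x2).
  { intros x1 x2 I1 I2 H. apply Rle_antisym; apply Hle; auto; lra. }
  assert (Hs : forall r, exists x, Iv lo hi x /\ G x = r).
  { intros r.
    destruct (ev_pt_left lo hi a (fun x => r < G x) Ia) as [x2 [I2 H2]].
    { apply (Hr (fun t => r < t)). exists r. auto. }
    destruct (ev_pt_right lo hi a (fun x => G x < r) Ia) as [x1 [I1 H1]].
    { apply (Hl (fun t => t < r)). exists r. auto. }
    assert (x1 < x2).
    { destruct (Rlt_or_le x1 x2) as [h|h]; auto.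
      destruct (Rle_lt_or_eq_dec _ _ h) as [h'|h'].
      - pose proof (Hinc _ _ I2 I1 h'). lra.
      - subst. lra. }
    destruct (Ranalysis5.IVT_interv (fun x => G x - r) x1 x2) as [w [Hw Hw2]].
    - intros c Hc'. apply (continuity_pt_minus G (fun _ => r)).
      apply Hc. apply (Iv_conv lo hi x1 x2); auto.
      apply continuity_pt_const. intros u v; auto.
    - auto.
    - lra.
    - lra.
    - exists w. split. apply (Iv_conv lo hi x1 x2); auto. lra. }
  split.
  { split; [auto|split; [exact Hinj|]]. intros y _. exact (Hs y). }
  set (Ginv := fun r => proj1_sig (constructive_indefinite_description _ (Hs r))).
  assert (GI : forall r, Iv lo hi (Ginv r) /\ G (Ginv r) = r).
  { intros r. unfold Ginv. destruct (constructive_indefinite_description _ (Hs r)); auto. }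
  assert (IG : forall x, Iv lo hi x -> Ginv (G x) = x).
  { intros x Ix. apply Hinj; auto. apply GI. apply GI. }
  exists Ginv. split; [exact IG|]. split; [intros r; apply GI|]. split.
  { split; [intros; apply GI|]. split.
    - intros r1 r2 _ _ E. rewrite <- (proj2 (GI r1)), <- (proj2 (GI r2)), E. auto.
    - intros x Ix. exists (G x). split; auto. }
  intros y. split; [|split].
  - split; [intros; apply GI|]. split.
    + intros x1 x2 I1 I2 E. apply Hinj; auto.
      assert (G (Ginv (G x1 + y)) = G (Ginv (G x2 + y))) by (rewrite E; auto).
      rewrite (proj2 (GI _)), (proj2 (GI _)) in H. lra.
    + intros w Iw. exists (Ginv (G w - y)). split; [apply GI|].
      rewrite (proj2 (GI _)). replace (G w - y + y) with (G w) by ring. auto.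
  - intros P HP. unfold filtermap. destruct (nbhd_lo lo hi a P Ia HP) as [p [Ip Hp]].
    apply (filter_imp (fun x => G x < G p - y)).
    + intros x Hx. apply Hp; [apply GI|].
      destruct (Rlt_or_le (Ginv (G x + y)) p) as [h|h]; auto.
      apply Rle_lt_or_eq_dec in h. destruct h as [h|h].
      * pose proof (Hinc _ _ Ip (proj1 (GI (G x + y))) h).
        rewrite (proj2 (GI _)) in H. lra.
      * rewrite h in Hx. rewrite (proj2 (GI _)) in Hx. lra.
    + apply (Hl (fun t => t < G p - y)). exists (G p - y). auto.
  - intros P HP. unfold filtermap. destruct (nbhd_hi lo hi a P Ia HP) as [p [Ip Hp]].
    apply (filter_imp (fun x => G p - y < G x)).
    + intros x Hx. apply Hp; [apply GI|].
      destruct (Rlt_or_le p (Ginv (G x + y))) as [h|h]; auto.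
      apply Rle_lt_or_eq_dec in h. destruct h as [h|h].
      * pose proof (Hinc _ _ (proj1 (GI (G x + y))) Ip h).
        rewrite (proj2 (GI _)) in H. lra.
      * rewrite <- h in Hx. rewrite (proj2 (GI _)) in Hx. lra.
    + apply (Hr (fun t => G p - y < t)). exists (G p - y). auto.
Qed.

Lemma lip_cont (sigma : R -> R) (L : R) : 0 < L ->
  (forall x y, Rabs (sigma x - sigma y) <= L * Rabs (x - y)) -> continuity sigma.
Proof.
  intros HL Hl x. apply continuity_pt_filterlim. apply filterlim_locally.
  intros eps. assert (Hd : 0 < eps / L) by (apply Rdiv_lt_0_compat; [apply cond_pos|lra]).
  exists (mkposreal _ Hd). intros y Hy. apply ball_R.
  assert (Hy' : Rabs (y - x) < eps / L) by (apply ball_R in Hy; exact Hy).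
  pose proof (Hl y x) as H2.
  assert (H1 : L * Rabs (y - x) < L * (eps / L)) by (apply Rmult_lt_compat_l; lra).
  replace (L * (eps / L)) with (pos eps) in H1 by (field; lra). lra.
Qed.

Lemma sign_const (sigma : R -> R) lo hi a : continuity sigma ->
  (forall x, Iv lo hi x -> sigma x <> 0) -> Iv lo hi a ->
  (forall x, Iv lo hi x -> 0 < sigma x) \/ (forall x, Iv lo hi x -> sigma x < 0).
Proof.
  intros Hc Hnz Ia.
  assert (Hno : forall x1 x2, Iv lo hi x1 -> Iv lo hi x2 -> x1 < x2 ->
     ~ (sigma x1 < 0 /\ 0 < sigma x2) /\ ~ (0 < sigma x1 /\ sigma x2 < 0)).
  { intros x1 x2 I1 I2 H12. split.
    - intros [A B]. destruct (IVT sigma x1 x2 Hc H12 A B) as [w [Hw Hw0]].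
      apply (Hnz w); auto. apply (Iv_conv lo hi x1 x2); auto.
    - intros [A B].
      destruct (IVT (fun t => - sigma t) x1 x2 (continuity_opp _ Hc) H12 ltac:(lra) ltac:(lra))
        as [w [Hw Hw0]].
      apply (Hnz w). apply (Iv_conv lo hi x1 x2); auto. lra. }
  assert (Ha := Hnz a Ia).
  destruct (Rlt_or_le 0 (sigma a)) as [Hp|Hp].
  - left. intros x Ix. destruct (Rlt_or_le 0 (sigma x)) as [h|h]; auto.
    assert (sigma x < 0) by (destruct h; auto; exfalso; apply (Hnz x Ix); auto).
    destruct (Rtotal_order x a) as [h1|[h1|h1]].
    + exfalso; apply (proj1 (Hno x a Ix Ia h1)); auto.
    + subst; lra.
    + exfalso; apply (proj2 (Hno a x Ia Ix h1)); auto.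
  - right. assert (Hn : sigma a < 0) by (destruct Hp; auto; exfalso; auto).
    intros x Ix. destruct (Rlt_or_le (sigma x) 0) as [h|h]; auto.
    assert (0 < sigma x) by (destruct h; auto; exfalso; apply (Hnz x Ix); auto).
    destruct (Rtotal_order x a) as [h1|[h1|h1]].
    + exfalso; apply (proj2 (Hno x a Ix Ia h1)); auto.
    + subst; lra.
    + exfalso; apply (proj1 (Hno a x Ia Ix h1)); auto.
Qed.

Lemma limits (sigma G : R -> R) lo hi a L :
  0 < L -> (forall x y, Rabs (sigma x - sigma y) <= L * Rabs (x - y)) ->
  (forall x, Iv lo hi x -> sigma x <> 0) -> Iv lo hi a ->
  (lo = m_infty \/ exists r, lo = Finite r /\ sigma r = 0) ->
  (hi = p_infty \/ exists b, hi = Finite b /\ sigma b = 0) ->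
  (forall x, Iv lo hi x -> is_derive G x (/ Rabs (sigma x))) ->
  filterlim G (from_right lo) (Rbar_locally m_infty) /\
  filterlim G (from_left hi) (Rbar_locally p_infty).
Proof.
  intros HL Hl Hnz Ia Hlo Hhi Hd.
  assert (Hsa : 0 < Rabs (sigma a)) by (apply Rabs_pos_lt; auto).
  split.
  - destruct Hlo as [->|[r [-> Hr]]]; simpl.
    + apply (div_left_inf G (fun x => / Rabs (sigma x)) a (Rabs (sigma a)) L); auto.
      * intros x Hx. apply Hd. split; [simpl; auto|].
        eapply Rbar_le_lt_trans; [|exact (proj2 Ia)]. simpl; lra.
      * intros x Hx.
        assert (Ix : Iv m_infty hi x).
        { split; [simpl; auto|]. eapply Rbar_le_lt_trans; [|exact (proj2 Ia)]. simpl; lra. }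
        apply Rinv_le_contravar. apply Rabs_pos_lt; auto.
        pose proof (Rabs_triang_inv (sigma x) (sigma a)) as T1. pose proof (Hl x a) as T2.
        rewrite (Rabs_left1 (x - a)) in T2 by lra. lra.
    + destruct Ia as [Ia1 Ia2]. simpl in Ia1.
      apply (div_left_fin G (fun x => / Rabs (sigma x)) a r L); auto.
      * intros x Hx. apply Hd. split; [simpl; lra|].
        eapply Rbar_le_lt_trans; [|exact Ia2]. simpl; lra.
      * intros x Hx.
        assert (Ix : Iv (Finite r) hi x).
        { split; [simpl; lra|]. eapply Rbar_le_lt_trans; [|exact Ia2]. simpl; lra. }
        apply Rinv_le_contravar. apply Rabs_pos_lt; auto.
        pose proof (Hl x r) as T2. rewrite Hr, Rminus_0_r, (Rabs_right (x - r)) in T2 by lra. lra.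
  - destruct Hhi as [->|[b [-> Hb]]]; simpl.
    + apply (div_right_inf G (fun x => / Rabs (sigma x)) a (Rabs (sigma a)) L); auto.
      * intros x Hx. apply Hd. split; [|simpl; auto].
        eapply Rbar_lt_le_trans; [exact (proj1 Ia)|]. simpl; lra.
      * intros x Hx.
        assert (Ix : Iv lo p_infty x).
        { split; [|simpl; auto]. eapply Rbar_lt_le_trans; [exact (proj1 Ia)|]. simpl; lra. }
        apply Rinv_le_contravar. apply Rabs_pos_lt; auto.
        pose proof (Rabs_triang_inv (sigma x) (sigma a)) as T1. pose proof (Hl x a) as T2.
        rewrite (Rabs_right (x - a)) in T2 by lra. lra.
    + destruct Ia as [Ia1 Ia2]. simpl in Ia2.
      apply (div_right_fin G (fun x => / Rabs (sigma x)) a b L); auto.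
      * intros x Hx. apply Hd. split; [|simpl; lra].
        eapply Rbar_lt_le_trans; [exact Ia1|]. simpl; lra.
      * intros x Hx.
        assert (Ix : Iv lo (Finite b) x).
        { split; [|simpl; lra]. eapply Rbar_lt_le_trans; [exact Ia1|]. simpl; lra. }
        apply Rinv_le_contravar. apply Rabs_pos_lt; auto.
        pose proof (Hl x b) as T2. rewrite Hb, Rminus_0_r, (Rabs_left (x - b)) in T2 by lra. lra.
Qed.

Lemma bij_on_ext (A B : R -> Prop) f g : (forall x, f x = g x) -> bij_on A B f -> bij_on A B g.
Proof.
  intros E [h1 [h2 h3]]. split; [|split].
  - intros x Hx. rewrite <- E. auto.
  - intros x1 x2 H1 H2 H. apply h2; auto. rewrite !E. auto.
  - intros y Hy. destruct (h3 y Hy) as [x [Hx Hx2]]. exists x. rewrite <- E. auto.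
Qed.

Lemma core (sigma H : R -> R) lo hi a L :
  0 < L -> (forall x y, Rabs (sigma x - sigma y) <= L * Rabs (x - y)) ->
  (forall x, Iv lo hi x -> sigma x <> 0) -> Iv lo hi a ->
  (lo = m_infty \/ exists r, lo = Finite r /\ sigma r = 0) ->
  (hi = p_infty \/ exists b, hi = Finite b /\ sigma b = 0) ->
  (forall x, Iv lo hi x -> is_derive H x (/ sigma x)) ->
  ((forall x1 x2, Iv lo hi x1 -> Iv lo hi x2 -> x1 <= x2 -> H x1 <= H x2) \/
   (forall x1 x2, Iv lo hi x1 -> Iv lo hi x2 -> x1 <= x2 -> H x2 <= H x1)) /\
  bij_on (Iv lo hi) (fun _ => True) H /\
  exists Hinv : R -> R,
    (forall x, Iv lo hi x -> Hinv (H x) = x) /\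
    (forall r, H (Hinv r) = r) /\
    bij_on (fun _ => True) (Iv lo hi) Hinv /\
    forall y : R,
      bij_on (Iv lo hi) (Iv lo hi) (fun x => Hinv (H x + y)) /\
      filterlim (fun x => Hinv (H x + y)) (from_right lo) (Rbar_locally lo) /\
      filterlim (fun x => Hinv (H x + y)) (from_left hi) (Rbar_locally hi).
Proof.
  intros HL Hl Hnz Ia Hlo Hhi Hd.
  assert (Hc := lip_cont sigma L HL Hl).
  assert (Gen : forall G : R -> R, (forall x, Iv lo hi x -> is_derive G x (/ Rabs (sigma x))) ->
     (forall x, Iv lo hi x -> continuity_pt G x) /\
     (forall x1 x2, Iv lo hi x1 -> Iv lo hi x2 -> x1 < x2 -> G x1 < G x2)).
  { intros G HG. split.
    - intros x Ix. apply continuity_pt_filterlim. apply (ex_derive_continuous G).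
      eexists; apply HG; auto.
    - intros x1 x2 I1 I2 h.
      apply (deriv_smono G (fun c => / Rabs (sigma c))); auto.
      + intros c Hc'. apply HG. apply (Iv_conv lo hi x1 x2); auto.
      + intros c Hc'. apply Rinv_0_lt_compat. apply Rabs_pos_lt. apply Hnz.
        apply (Iv_conv lo hi x1 x2); auto. }
  destruct (sign_const sigma lo hi a Hc Hnz Ia) as [Pos|Neg].
  - assert (HG : forall x, Iv lo hi x -> is_derive H x (/ Rabs (sigma x))).
    { intros x Ix. rewrite Rabs_right by (pose proof (Pos x Ix); lra). auto. }
    destruct (Gen H HG) as [Hcont Hinc].
    destruct (limits sigma H lo hi a L HL Hl Hnz Ia Hlo Hhi HG) as [Lm Lp].
    destruct (abstract_inc lo hi a H Ia Hcont Hinc Lm Lp) as [B E].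
    split; [|split; [exact B|exact E]].
    left. intros x1 x2 I1 I2 h. destruct (Rle_lt_or_eq_dec _ _ h) as [h'|h'].
    + apply Rlt_le; auto.
    + subst; lra.
  - set (G := fun x => - H x).
    assert (HG : forall x, Iv lo hi x -> is_derive G x (/ Rabs (sigma x))).
    { intros x Ix. pose proof (Neg x Ix).
      replace (/ Rabs (sigma x)) with (- / sigma x).
      apply (is_derive_opp H). auto.
      rewrite Rabs_left by lra. field. lra. }
    destruct (Gen G HG) as [Hcont Hinc].
    destruct (limits sigma G lo hi a L HL Hl Hnz Ia Hlo Hhi HG) as [Lm Lp].
    destruct (abstract_inc lo hi a G Ia Hcont Hinc Lm Lp)
      as [[B1 [B2 B3]] [Ginv [IG [GI [[C1 [C2 C3]] D]]]]].
    unfold G in *.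
    split.
    { right. intros x1 x2 I1 I2 h. destruct (Rle_lt_or_eq_dec _ _ h) as [h'|h'].
      + pose proof (Hinc x1 x2 I1 I2 h'). lra.
      + subst; lra. }
    split.
    { split; [auto|split].
      - intros x1 x2 I1 I2 E. apply B2; auto. rewrite E; auto.
      - intros y _. destruct (B3 (- y) I) as [x [Ix Hx]]. exists x. split; auto. lra. }
    exists (fun r => Ginv (- r)). split; [|split; [|split]].
    + intros x Ix. apply IG; auto.
    + intros r. pose proof (GI (- r)). lra.
    + split; [auto|split].
      * intros r1 r2 _ _ E. pose proof (GI (- r1)). pose proof (GI (- r2)).
        rewrite E in H0. lra.
      * intros x Ix. exists (H x). split; auto.
    + intros y. destruct (D (- y)) as [D1 [D2 D3]].
      assert (Eq : forall x, Ginv (- H x + - y) = Ginv (- (H x + y))).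
      { intros x. f_equal. ring. }
      split; [|split].
      * exact (bij_on_ext _ _ _ _ Eq D1).
      * exact (filterlim_ext _ _ Eq D2).
      * exact (filterlim_ext _ _ Eq D3).
Qed.

Lemma z_mono (n : nat) (z : nat -> R)
  (Hz_incr : forall k : nat, (1 <= k)%nat -> (k < n)%nat -> z k < z (S k)) :
  forall d k, (1 <= k)%nat -> (k + S d <= n)%nat -> z k < z (k + S d)%nat.
Proof.
  induction d as [|d IH]; intros k Hk Hkd.
  - rewrite Nat.add_1_r. apply Hz_incr; lia.
  - apply Rlt_trans with (z (k + S d)%nat). apply IH; lia.
    replace (k + S (S d))%nat with (S (k + S d)) by lia. apply Hz_incr; lia.
Qed.

Lemma z_le (n : nat) (z : nat -> R)
  (Hz_incr : forall k : nat, (1 <= k)%nat -> (k < n)%nat -> z k < z (S k)) :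
  forall k j, (1 <= k)%nat -> (k <= j)%nat -> (j <= n)%nat -> z k <= z j.
Proof.
  intros k j H1 H2 H3. destruct (Nat.eq_dec k j) as [->|Hne]; [lra|].
  replace j with (k + S (j - k - 1))%nat by lia.
  apply Rlt_le. apply (z_mono n z Hz_incr); lia.
Qed.

Theorem lemma3 (sigma : R -> R) (n : nat) (z : nat -> R) (a : nat -> R)
  (Hlip : lipschitz sigma)
  (Hz_incr : forall k : nat, (1 <= k)%nat -> (k < n)%nat -> z k < z (S k))
  (Hz_zeros : forall x, sigma x = 0 <-> exists k : nat, (1 <= k)%nat /\ (k <= n)%nat /\ x = z k)
  (Ha : forall i : nat, (i <= n)%nat -> in_ival n z i (a i)) :
  forall i : nat, (i <= n)%nat ->
    (* (i) well defined and monotone *)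
    (forall x, in_ival n z i x -> ex_RInt (fun y => / sigma y) (a i) x) /\
    ((forall x1 x2, in_ival n z i x1 -> in_ival n z i x2 -> x1 <= x2 ->
        Hfun sigma a i x1 <= Hfun sigma a i x2) \/
     (forall x1 x2, in_ival n z i x1 -> in_ival n z i x2 -> x1 <= x2 ->
        Hfun sigma a i x2 <= Hfun sigma a i x1)) /\
    (* (ii) bijection onto R *)
    bij_on (in_ival n z i) (fun _ => True) (Hfun sigma a i) /\
    (* (iii) inverse, a bijection from R onto (x_i, x_{i+1}) *)
    exists Hinv : R -> R,
      (forall x, in_ival n z i x -> Hinv (Hfun sigma a i x) = x) /\
      (forall r, Hfun sigma a i (Hinv r) = r) /\
      bij_on (fun _ => True) (in_ival n z i) Hinv /\
    (* (iv) *)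
      forall y : R,
        bij_on (in_ival n z i) (in_ival n z i)
               (fun x => Hinv (Hfun sigma a i x + y)) /\
        filterlim (fun x => Hinv (Hfun sigma a i x + y))
                  (from_right (xlo z i)) (Rbar_locally (xlo z i)) /\
        filterlim (fun x => Hinv (Hfun sigma a i x + y))
                  (from_left (xhi n z i)) (Rbar_locally (xhi n z i)).
Proof.
  intros i Hi.
  destruct Hlip as [L0 HL0].
  assert (Hl : forall x y, Rabs (sigma x - sigma y) <= (Rabs L0 + 1) * Rabs (x - y)).
  { intros x y. pose proof (HL0 x y). pose proof (Rle_abs L0).
    pose proof (Rabs_pos (x - y)). nra. }
  assert (HL : 0 < Rabs L0 + 1) by (pose proof (Rabs_pos L0); lra).
  change (in_ival n z i) with (Iv (xlo z i) (xhi n z i)).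
  assert (Ia : Iv (xlo z i) (xhi n z i) (a i)) by (apply Ha; auto).
  assert (Hnz : forall x, Iv (xlo z i) (xhi n z i) x -> sigma x <> 0).
  { intros x [Ix1 Ix2] E. apply Hz_zeros in E. destruct E as [k [Hk1 [Hk2 ->]]].
    destruct (Compare_dec.le_lt_dec k i) as [hk|hk].
    - destruct i as [|i']; [lia|]. simpl in Ix1.
      pose proof (z_le n z Hz_incr k (S i') Hk1 hk Hi). lra.
    - unfold xhi in Ix2. destruct (Nat.eqb_spec i n) as [e|e]; [lia|].
      simpl in Ix2. pose proof (z_le n z Hz_incr (S i) k ltac:(lia) ltac:(lia) Hk2). lra. }
  assert (Hlo : xlo z i = m_infty \/ exists r, xlo z i = Finite r /\ sigma r = 0).
  { destruct i as [|i']; [left; auto|right]. exists (z (S i')). split; auto.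
    apply Hz_zeros. exists (S i'). repeat split; lia. }
  assert (Hhi : xhi n z i = p_infty \/ exists b, xhi n z i = Finite b /\ sigma b = 0).
  { unfold xhi. destruct (Nat.eqb_spec i n) as [e|e]; [left; auto|right].
    exists (z (S i)). split; auto. apply Hz_zeros. exists (S i). repeat split; lia. }
  assert (Hcs := lip_cont sigma _ HL Hl).
  assert (Hfc : forall x, Iv (xlo z i) (xhi n z i) x -> continuous (fun y => / sigma y) x).
  { intros x Ix. apply continuity_pt_filterlim.
    apply (continuity_pt_inv sigma). apply Hcs. apply Hnz; auto. }
  assert (Hex : forall x, Iv (xlo z i) (xhi n z i) x -> ex_RInt (fun y => / sigma y) (a i) x).
  { intros x Ix. apply (@ex_RInt_continuous R_CompleteNormedModule). intros w Hw. apply Hfc.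
    destruct (Rle_or_lt (a i) x) as [h|h].
    - rewrite Rmin_left, Rmax_right in Hw by lra.
      apply (Iv_conv _ _ (a i) x); auto.
    - rewrite Rmin_right, Rmax_left in Hw by lra.
      apply (Iv_conv _ _ x (a i)); auto. }
  assert (Hd : forall x, Iv (xlo z i) (xhi n z i) x ->
            is_derive (Hfun sigma a i) x (/ sigma x)).
  { intros x Ix. unfold Hfun.
    apply (is_derive_RInt (fun y => / sigma y) (RInt (fun y => / sigma y) (a i)) (a i) x).
    - assert (Op : locally x (Iv (xlo z i) (xhi n z i))).
      { apply (open_and _ _ (open_Rbar_gt _) (open_Rbar_lt _)). exact Ix. }
      eapply filter_imp; [|exact Op]. intros w Iw. apply (@RInt_correct R_CompleteNormedModule). apply Hex; auto.
    - apply Hfc; auto. }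
  split; [exact Hex|].
  exact (core sigma (Hfun sigma a i) _ _ (a i) _ HL Hl Hnz Ia Hlo Hhi Hd).
Qed.
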